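(* Let $\phi(a)=(1-a)^2$ and assume $\Omega$ is differentiable, so that $R_\phi$ and each $R^{\mathrm{semi}}_\phi(\cdot,\mathbf{q})$ are convex and differentiable; let $\mathbf{w}_{\mathrm{sup}}$ be a minimizer of $R_\phi$. Then: (a) For $\mathbf{q}\in[0,1]^U$, $\mathbf{w}_{\mathrm{sup}}$ minimizes $R^{\mathrm{semi}}_\phi(\cdot,\mathbf{q})$ if and only if $\mathbf{X}_{\mathrm{u}}^\top\mathbf{q}=\tfrac12\big(\mathbf{X}_{\mathrm{u}}^\top\mathbf{1}+\mathbf{X}_{\mathrm{u}}^\top\mathbf{X}_{\mathrm{u}}\mathbf{w}_{\mathrm{sup}}\big)$, where $\mathbf{1}\in\mathbb{R}^U$ is the all-ones vector. (b) If $\mathbf{X}_{\mathrm{u}}$ has rank $U$ (so $d\ge U$) and $\mathbf{X}_{\mathrm{u}}\mathbf{w}_{\mathrm{sup}}\notin[-1,1]^U$, then no $\mathbf{q}\in[0,1]^U$ makes $\mathbf{w}_{\mathrm{sup}}$ a minimizer of $R^{\mathrm{semi}}_\phi(\cdot,\mathbf{q})$, i.e. $\mathbf{w}_{\mathrm{sup}}\notin\mathcal{C}_\phi$. (c) If $\|\mathbf{X}_{\mathrm{u}}\mathbf{w}_{\mathrm{sup}}\|_2>\sqrt{U}$, then no $\mathbf{q}\in[0,1]^U$ makes $\mathbf{w}_{\mathrm{sup}}$ a minimizer of $R^{\mathrm{semi}}_\phi(\cdot,\mathbf{q})$, i.e. $\mathbf{w}_{\mathrm{sup}}\notin\mathc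al{C}_\phi$.
   Context: Fix integers $L,U,d\ge 1$. Let $\mathbf{X}\in\mathbb{R}^{L\times d}$ be a matrix whose rows $\mathbf{x}_1^\top,\dots,\mathbf{x}_L^\top$ are the labeled objects, with labels $\mathbf{y}\in\{-1,+1\}^L$. Let $\mathbf{X}_{\mathrm{u}}\in\mathbb{R}^{U\times d}$ be a matrix whose rows $\mathbf{x}_{\mathrm{u},1}^\top,\dots,\mathbf{x}_{\mathrm{u},U}^\top$ are the unlabeled objects. Let $\phi:\mathbb{R}\to\mathbb{R}$ be a loss function, $\Omega:\mathbb{R}^d\to\mathbb{R}$ a convex function and $\lambda\ge 0$. The supervised risk is $R_\phi(\mathbf{w})=\sum_{i=1}^L\phi(y_i\mathbf{x}_i^\top\mathbf{w})+\lambda\Omega(\mathbf{w})$. For responsibilities $\mathbf{q}\in[0,1]^U$ the semi-supervised risk is $R^{\mathrm{semi}}_\phi(\mathbf{w},\mathbf{q})=R_\phi(\mathbf{w})+\sum_{j=1}^U\big[q_j\phi(\mathbf{x}_{\mathrm{u},j}^\top\mathbf{w})+(1-q_j)\phi(-\mathbf{x}_{\mathrm{u},j}^\top\mathbf{w})\big]$. The constraint set is $\mathcal{C}_\phi=\{\mathbf{w}\in\mathbb{R}^d:\ \exists\,\mathbf{q}\in[0,1]^U \text{ such that } \mathbf{w} \text{ minimizes } R^{\mathrm{semi}}_\phi(\cdot,\mathbf{q})\}$. *)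

(* Defs.v *)
From HB Require Import structures.
From mathcomp Require Import all_boot all_order all_algebra.
Set Implicit Arguments. Unset Strict Implicit. Unset Printing Implicit Defensive.
Import Order.TTheory GRing.Theory Num.Theory.
Local Open Scope ring_scope.

Section Defs.
Variable R : rcfType.

Definition norm2 (n : nat) (v : 'cV[R]_n) : R :=
  Num.sqrt (\sum_(i < n) v i 0 ^+ 2).

Definition convex_fun (d : nat) (f : 'cV[R]_d -> R) : Prop :=
  forall (x y : 'cV[R]_d) (t : R), 0 <= t -> t <= 1 ->
    f ((1 - t) *: x + t *: y) <= (1 - t) * f x + t * f y.

Definition differentiable_at (d : nat) (f : 'cV[R]_d -> R) (w : 'cV[R]_d) : Prop :=
  exists g : 'cV[R]_d, forall eps : R, 0 < eps -> exists delta : R, 0 < delta /\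
    forall h : 'cV[R]_d, norm2 h < delta ->
      `| f (w + h) - f w - (g^T *m h) 0 0 | <= eps * norm2 h.

Definition differentiable_fun (d : nat) (f : 'cV[R]_d -> R) : Prop :=
  forall w, differentiable_at f w.

Definition minimizes (d : nat) (f : 'cV[R]_d -> R) (w : 'cV[R]_d) : Prop :=
  forall v, f w <= f v.

Definition sqloss (a : R) : R := (1 - a) ^+ 2.

Definition Rsup (L d : nat) (phi : R -> R) (X : 'M[R]_(L, d)) (y : 'cV[R]_L)
  (Omega : 'cV[R]_d -> R) (lambda : R) (w : 'cV[R]_d) : R :=
  \sum_(i < L) phi (y i 0 * (X *m w) i 0) + lambda * Omega w.

Definition Rsemi (L U d : nat) (phi : R -> R) (X : 'M[R]_(L, d)) (y : 'cV[R]_L)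
  (Xu : 'M[R]_(U, d)) (Omega : 'cV[R]_d -> R) (lambda : R)
  (w : 'cV[R]_d) (q : 'cV[R]_U) : R :=
  Rsup phi X y Omega lambda w +
  \sum_(j < U) (q j 0 * phi ((Xu *m w) j 0) + (1 - q j 0) * phi (- (Xu *m w) j 0)).

Definition in_unit_box (U : nat) (q : 'cV[R]_U) : Prop :=
  forall j : 'I_U, 0 <= q j 0 /\ q j 0 <= 1.

Definition Cphi (L U d : nat) (phi : R -> R) (X : 'M[R]_(L, d)) (y : 'cV[R]_L)
  (Xu : 'M[R]_(U, d)) (Omega : 'cV[R]_d -> R) (lambda : R) (w : 'cV[R]_d) : Prop :=
  exists q : 'cV[R]_U, in_unit_box q /\
    minimizes (fun v => Rsemi phi X y Xu Omega lambda v q) w.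

End Defs.

(* Main.v *)
Require Import Defs.
From HB Require Import structures.
From mathcomp Require Import all_boot all_order all_algebra.
From mathcomp Require Import ring lra.
Import Order.TTheory GRing.Theory Num.Theory.
Local Open Scope ring_scope.

Lemma oneD_zero (R : rcfType) (k M lam n : R) (r : R -> R) :
  0 <= lam -> 0 <= n ->
  (forall eps, 0 < eps -> exists delta, 0 < delta /\
     forall t, `|t| * n < delta -> `|r t| <= eps * (`|t| * n)) ->
  (forall t, 0 <= t * k + t ^+ 2 * M + lam * r t) -> k = 0.
Proof.
move=> hl hn hr hq.
apply/eqP; apply/negPn/negP => hk.
have hK : 0 < `|k| by rewrite normr_gt0.
set eps := `|k| / (2 * (lam * n + 1)).
have heps0 : 0 < eps.
  rewrite /eps divr_gt0 //; nra.
have heps : eps * (2 * (lam * n + 1)) = `|k|.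
  rewrite /eps mulfVK //; apply/lt0r_neq0; nra.
have [delta [hd hdr]] := hr eps heps0.
set tau := Num.min (delta / (n + 1)) (`|k| / (2 * (`|M| + 1))).
have htau0 : 0 < tau.
  have := normr_ge0 M => hM0.
  rewrite /tau lt_min; apply/andP; split; apply: divr_gt0 => //; nra.
have htau1 : tau * (n + 1) <= delta.
  rewrite -ler_pdivlMr; last lra.
  by rewrite /tau ge_min lexx.
have htau2 : tau * (2 * (`|M| + 1)) <= `|k|.
  rewrite -ler_pdivlMr; last (have := normr_ge0 M; lra).
  by rewrite /tau ge_min lexx orbT.
have hM : M <= `|M| := ler_norm M.
have hM0 : 0 <= `|M| := normr_ge0 M.
pose t := if 0 < k then - tau else tau.
have ht : `|t| = tau by rewrite /t; case: ifP => _; rewrite ?normrN gtr0_norm.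
have htk : t * k = - (tau * `|k|).
  rewrite /t; case: ifP => hk0.
    by rewrite gtr0_norm // mulNr.
  have hk1 : k < 0 by move: hk0 hk; case: ltgtP.
  by rewrite ltr0_norm // mulrN opprK.
have ht2 : t ^+ 2 = tau ^+ 2 by rewrite -ht real_normK // num_real.
have := hq t; rewrite htk ht2 => H.
have hrt := hdr t; rewrite ht in hrt.
have hrt' : `|r t| <= eps * (tau * n) by apply: hrt; nra.
have hr2 : r t <= eps * (tau * n) by apply: le_trans (ler_norm _) hrt'.
have h3 : lam * r t <= lam * (eps * (tau * n)) by apply: ler_wpM2l.
have h4 : tau ^+ 2 * M <= tau ^+ 2 * `|M| by apply: ler_wpM2l; rewrite ?sqr_ge0.
nra.
Qed.


Set Implicit Arguments. Unset Strict Implicit.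
Section S.
Variable R : rcfType.

Lemma mulpt (m d : nat) (A : 'M[R]_(m, d)) (w h : 'cV[R]_d) (t : R) (i : 'I_m) :
  (A *m (w + t *: h)) i 0 = (A *m w) i 0 + t * (A *m h) i 0.
Proof. by rewrite mulmxDr -scalemxAr mxE [in X in _ + X]mxE. Qed.

Lemma Fexp (L d : nat) (X : 'M[R]_(L, d)) (y : 'cV[R]_L) (Om : 'cV[R]_d -> R)
  (lam : R) (w h : 'cV[R]_d) (t : R) :
  Rsup (@sqloss R) X y Om lam (w + t *: h) =
  Rsup (@sqloss R) X y Om lam w
  + t * (\sum_i (-2) * (1 - y i 0 * (X *m w) i 0) * (y i 0 * (X *m h) i 0))
  + t ^+ 2 * (\sum_i (y i 0 * (X *m h) i 0) ^+ 2)
  + lam * (Om (w + t *: h) - Om w).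
Proof.
rewrite /Rsup /sqloss.
have -> : \sum_i (1 - y i 0 * (X *m (w + t *: h)) i 0) ^+ 2 =
  \sum_i ((1 - y i 0 * (X *m w) i 0) ^+ 2
     + t * ((-2) * (1 - y i 0 * (X *m w) i 0) * (y i 0 * (X *m h) i 0))
     + t ^+ 2 * (y i 0 * (X *m h) i 0) ^+ 2).
  by apply: eq_bigr => i _; rewrite mulpt; ring.
rewrite !big_split /= -!mulr_sumr; ring.
Qed.

Definition Eterm (U d : nat) (Xu : 'M[R]_(U, d)) (q : 'cV[R]_U) (w : 'cV[R]_d) :=
  \sum_(j < U) (q j 0 * sqloss ((Xu *m w) j 0) + (1 - q j 0) * sqloss (- (Xu *m w) j 0)).

Definition vres (U d : nat) (Xu : 'M[R]_(U, d)) (q : 'cV[R]_U) (w : 'cV[R]_d) : 'cV[R]_U :=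
  const_mx 1 + Xu *m w - 2 *: q.

Lemma Eexp (U d : nat) (Xu : 'M[R]_(U, d)) (q : 'cV[R]_U) (w h : 'cV[R]_d) (t : R) :
  Eterm Xu q (w + t *: h) = Eterm Xu q w
   + t * (2 * (h^T *m (Xu^T *m vres Xu q w)) 0 0)
   + t ^+ 2 * (\sum_j ((Xu *m h) j 0) ^+ 2).
Proof.
rewrite /Eterm /sqloss.
have -> : (h^T *m (Xu^T *m vres Xu q w)) 0 0 =
    \sum_j (Xu *m h) j 0 * vres Xu q w j 0.
  by rewrite mulmxA -trmx_mul mxE; apply: eq_bigr => j _; rewrite mxE.
have -> : \sum_j (q j 0 * (1 - (Xu *m (w + t *: h)) j 0) ^+ 2 +
      (1 - q j 0) * (1 - - (Xu *m (w + t *: h)) j 0) ^+ 2) =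
  \sum_j ((q j 0 * (1 - (Xu *m w) j 0) ^+ 2 +
      (1 - q j 0) * (1 - - (Xu *m w) j 0) ^+ 2)
     + t * (2 * ((Xu *m h) j 0 * vres Xu q w j 0))
     + t ^+ 2 * ((Xu *m h) j 0) ^+ 2).
  apply: eq_bigr => j _; rewrite !mulpt /vres !mxE; ring.
rewrite !big_split /= -!mulr_sumr; ring.
Qed.

Lemma Rsemi_split (L U d : nat) (X : 'M[R]_(L, d)) (y : 'cV[R]_L) (Xu : 'M[R]_(U, d))
  (Om : 'cV[R]_d -> R) (lam : R) (w : 'cV[R]_d) (q : 'cV[R]_U) :
  Rsemi (@sqloss R) X y Xu Om lam w q = Rsup (@sqloss R) X y Om lam w + Eterm Xu q w.
Proof. by []. Qed.

Lemma norm2Z (n : nat) (t : R) (h : 'cV[R]_n) : norm2 (t *: h) = `|t| * norm2 h.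
Proof.
rewrite /norm2.
have -> : \sum_(i < n) (t *: h) i 0 ^+ 2 = t ^+ 2 * \sum_(i < n) h i 0 ^+ 2.
  by rewrite mulr_sumr; apply: eq_bigr => i _; rewrite mxE exprMn.
by rewrite sqrtrM ?sqr_ge0 // sqrtr_sqr.
Qed.

Lemma norm2_ge0 (n : nat) (h : 'cV[R]_n) : 0 <= norm2 h.
Proof. exact: sqrtr_ge0. Qed.

Lemma rem_small (d : nat) (Om : 'cV[R]_d -> R) (w h g : 'cV[R]_d) :
  (forall eps : R, 0 < eps -> exists delta : R, 0 < delta /\
    forall h : 'cV[R]_d, norm2 h < delta ->
      `| Om (w + h) - Om w - (g^T *m h) 0 0 | <= eps * norm2 h) ->
  forall eps, 0 < eps -> exists delta, 0 < delta /\
     forall t, `|t| * norm2 h < delta ->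
     `|Om (w + t *: h) - Om w - t * (g^T *m h) 0 0| <= eps * (`|t| * norm2 h).
Proof.
move=> hd eps heps; have [delta [hd0 hdd]] := hd eps heps.
exists delta; split => // t ht.
have := hdd (t *: h); rewrite norm2Z -scalemxAr mxE.
by apply.
Qed.

Lemma grad0 (L U d : nat) (X : 'M[R]_(L, d)) (y : 'cV[R]_L) (Xu : 'M[R]_(U, d))
  (Om : 'cV[R]_d -> R) (lam : R) (w : 'cV[R]_d) (q : 'cV[R]_U) :
  0 <= lam -> differentiable_at Om w ->
  minimizes (Rsup (@sqloss R) X y Om lam) w ->
  minimizes (fun v => Rsemi (@sqloss R) X y Xu Om lam v q) w ->
  Xu^T *m vres Xu q w = 0.
Proof.
move=> hl [g hg] hF hS.
apply/matrixP => k j; rewrite (ord1 j) [RHS]mxE.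
set h : 'cV[R]_d := delta_mx k 0.
set r := fun t => Om (w + t *: h) - Om w - t * (g^T *m h) 0 0.
have hr := rem_small h hg.
set gh := (g^T *m h) 0 0.
set cF := \sum_i (-2) * (1 - y i 0 * (X *m w) i 0) * (y i 0 * (X *m h) i 0).
set AF := \sum_i (y i 0 * (X *m h) i 0) ^+ 2.
set e := 2 * (h^T *m (Xu^T *m vres Xu q w)) 0 0.
set B := \sum_j ((Xu *m h) j 0) ^+ 2.
have h1 : cF + lam * gh = 0.
  apply: (@oneD_zero R _ AF lam (norm2 h) r hl (norm2_ge0 h) hr) => t.
  have := hF (w + t *: h); rewrite Fexp -/cF -/AF.
  have -> : Om (w + t *: h) - Om w = r t + t * gh by rewrite /r /gh; ring.
  move=> H; rewrite -subr_ge0 in H; move: H.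
  set z := (X in 0 <= X -> _); set z' := (X in _ -> 0 <= X).
  by have -> : z = z' by rewrite /z /z'; ring.
have h2 : cF + lam * gh + e = 0.
  apply: (@oneD_zero R _ (AF + B) lam (norm2 h) r hl (norm2_ge0 h) hr) => t.
  have := hS (w + t *: h); rewrite /= !Rsemi_split Fexp Eexp -/cF -/AF -/e -/B.
  have -> : Om (w + t *: h) - Om w = r t + t * gh by rewrite /r /gh; ring.
  move=> H; rewrite -subr_ge0 in H; move: H.
  set z := (X in 0 <= X -> _); set z' := (X in _ -> 0 <= X).
  by have -> : z = z' by rewrite /z /z'; ring.
have he : e = 0 by rewrite h1 add0r in h2.
move: he; rewrite /e /h trmx_delta -rowE mxE => /eqP.
by rewrite mulf_eq0 pnatr_eq0 /= => /eqP.
Qed.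

Lemma cond_equiv (U d : nat) (Xu : 'M[R]_(U, d)) (q : 'cV[R]_U) (w : 'cV[R]_d) :
  (Xu^T *m q = 2^-1 *: (Xu^T *m const_mx 1 + Xu^T *m Xu *m w)) <->
  Xu^T *m vres Xu q w = 0.
Proof.
rewrite /vres mulmxBr mulmxDr -scalemxAr mulmxA.
have h2 : (2 : R) != 0 by rewrite pnatr_eq0.
split.
  by move->; rewrite scalerA mulfV // scale1r subrr.
by move/eqP; rewrite subr_eq0 => /eqP ->; rewrite scalerA mulVf // scale1r.
Qed.

Lemma vres_dot (U d : nat) (Xu : 'M[R]_(U, d)) (q : 'cV[R]_U) (w : 'cV[R]_d) :
  Xu^T *m vres Xu q w = 0 ->
  \sum_j (Xu *m w) j 0 * vres Xu q w j 0 = 0.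
Proof.
move=> h0.
have : ((Xu *m w)^T *m vres Xu q w) 0 0 = 0.
  by rewrite trmx_mul -mulmxA h0 mulmx0 mxE.
move=> H; apply: etrans H; rewrite [RHS]mxE; apply: eq_bigr => j _; by rewrite [in RHS]mxE.
Qed.

Lemma vres_entry (U : nat) (A C : 'cV[R]_U) (j : 'I_U) :
  (const_mx 1 + A - 2 *: C) j 0 = 1 + A j 0 - 2 * C j 0.
Proof. by rewrite !mxE. Qed.

End S.

Theorem mainTheorem8 (R : rcfType) (L U d : nat)
  (X : 'M[R]_(L, d)) (y : 'cV[R]_L) (Xu : 'M[R]_(U, d))
  (Omega : 'cV[R]_d -> R) (lambda : R) (wsup : 'cV[R]_d) :
  (0 < L)%N -> (0 < U)%N -> (0 < d)%N ->
  (forall i : 'I_L, y i 0 = 1 \/ y i 0 = -1) ->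
  convex_fun Omega -> differentiable_fun Omega -> 0 <= lambda ->
  minimizes (Rsup (@sqloss R) X y Omega lambda) wsup ->
  (* (a) *)
  (forall q : 'cV[R]_U, in_unit_box q ->
     (minimizes (fun w => Rsemi (@sqloss R) X y Xu Omega lambda w q) wsup <->
      Xu^T *m q = 2^-1 *: (Xu^T *m const_mx 1 + Xu^T *m Xu *m wsup)))
  /\
  (* (b) *)
  (\rank Xu = U ->
   ~ (forall j : 'I_U, -1 <= (Xu *m wsup) j 0 <= 1) ->
   ~ Cphi (@sqloss R) X y Xu Omega lambda wsup)
  /\
  (* (c) *)
  (Num.sqrt (U%:R) < norm2 (Xu *m wsup) ->
   ~ Cphi (@sqloss R) X y Xu Omega lambda wsup).
Proof.
move=> _ _ _ _ _ hdiff hl hmin.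
split; [|split].
- move=> q hq; split.
    by move=> hS; apply/cond_equiv; apply: (grad0 hl (hdiff wsup) hmin hS).
  move=> /cond_equiv hc v /=; rewrite !Rsemi_split.
  set h := v - wsup.
  have -> : v = wsup + 1 *: h by rewrite scale1r /h addrC subrK.
  rewrite Eexp hc mulmx0 mxE mulr0 mulr0 addr0 expr1n mul1r.
  have := hmin (wsup + 1 *: h).
  have : 0 <= \sum_j ((Xu *m h) j 0) ^+ 2 by apply: sumr_ge0 => j _; apply: sqr_ge0.
  lra.
- move=> hrank hnot [q [hq hS]].
  have v0 := grad0 hl (hdiff wsup) hmin hS.
  have hfree : row_free Xu by rewrite /row_free hrank.
  have : (vres Xu q wsup)^T *m Xu == 0 by rewrite -[Xu]trmxK -trmx_mul trmxK v0 trmx0.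
  rewrite mulmx_free_eq0 // => /eqP vt0.
  apply: hnot => j.
  have := congr1 (fun M : 'rV[R]_U => M 0 j) vt0; rewrite !mxE /=.
  have [hq0 hq1] := hq j.
  move=> H; apply/andP; split; lra.
- move=> hn [q [hq hS]].
  have v0 := grad0 hl (hdiff wsup) hmin hS.
  have hd := vres_dot v0.
  have hle : \sum_j ((Xu *m wsup) j 0) ^+ 2 <=
             \sum_j (1 + 2 * ((Xu *m wsup) j 0 * vres Xu q wsup j 0)).
    apply: ler_sum => j _; rewrite /vres vres_entry.
    set a := (Xu *m wsup) j 0; set c := q j 0.
    have [hq0 hq1] : 0 <= c /\ c <= 1 := hq j.
    have h1 : 0 <= (a - (2 * c - 1)) ^+ 2 by apply: sqr_ge0.
    have h2 : 0 <= c * (1 - c) by apply: mulr_ge0; lra.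
    nra.
  rewrite big_split /= -mulr_sumr hd mulr0 addr0 sumr_const card_ord in hle.
  have := ler_wsqrtr hle; rewrite -/(norm2 _).
  lra.
Qed.
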